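(* Let $m\geq 13$ and $k\geq 1$ be integers and let $c(x)=1+\sum_{j\in\{1,2,5,6\}}(x^j+x^{m-j})\in\mathbb{F}_2[x]$. Then $\gcd(c(x^k),x^m-1)=1$ if and only if $\gcd(m,3k)=\gcd(m,k)$.
   Context: All polynomials are over $\mathbb{F}_2$. *)

(* Defs.v *)
From HB Require Import structures.
From mathcomp Require Import all_boot all_order all_algebra.
Set Implicit Arguments. Unset Strict Implicit. Unset Printing Implicit Defensive.
Import GRing.Theory.
Local Open Scope ring_scope.

Definition cpoly (m : nat) : {poly 'F_2} :=
  1 + \sum_(j <- [:: 1%N; 2%N; 5%N; 6%N]) ('X^j + 'X^(m - j)).

(* Main.v *)
Require Import Defs.
From HB Require Import structures.
From mathcomp Require Import all_boot all_order all_algebra.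
From mathcomp Require Import zify ring.
Local Open Scope ring_scope.
Import GRing.Theory.

Local Notation F := 'F_2.

Lemma two0 : (2%:R : {poly F}) = 0.
Proof. by rewrite -polyC_natr; have -> : (2%:R : F) = 0 by apply/val_inj. Qed.

Lemma dvd_XnM (a b : nat) : ('X^a - 1 : {poly F}) %| 'X^(a * b) - 1.
Proof. by rewrite exprM [in X in _ %| X]subrX1 dvdp_mulr. Qed.

Lemma dvd_XnD (a c : nat) : (c %| a)%N -> ('X^c - 1 : {poly F}) %| 'X^a - 1.
Proof. by move=> /divnK <-; rewrite mulnC dvd_XnM. Qed.

Lemma dvd_Xgcd (d : {poly F}) (a b : nat) : (0 < a)%N ->
  d %| 'X^a - 1 -> d %| 'X^b - 1 -> d %| 'X^(gcdn a b) - 1.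
Proof.
move=> Ha h1 h2.
case: (egcdnP b Ha) => km kn E _.
have h1' : d %| 'X^(km * a) - 1 by apply: dvdp_trans h1 _; rewrite mulnC dvd_XnM.
have h2' : d %| 'X^(kn * b) - 1 by apply: dvdp_trans h2 _; rewrite mulnC dvd_XnM.
have eq : ('X^(km * a) - 1 : {poly F}) =
   'X^(gcdn a b) * ('X^(kn * b) - 1) + ('X^(gcdn a b) - 1).
  by rewrite E exprD; ring.
by move: h1'; rewrite eq dvdp_addr // dvdp_mull.
Qed.

Lemma gcd3 (m a : nat) : gcdn m (3 * a) = gcdn m (3 * gcdn m a).
Proof.
have e : gcdn m (3 * m) = m by apply/gcdn_idPl; rewrite dvdn_mull.
by rewrite muln_gcdr gcdnA e.
Qed.

Theorem proposition4 (m k : nat) (hm : (13 <= m)%N) (hk : (1 <= k)%N) :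
  coprimep (cpoly m \Po 'X^k) ('X^m - 1) <-> gcdn m (3 * k) = gcdn m k.
Proof.
set Z : {poly F} := 'X^k.
set M : {poly F} := 'X^m - 1.
set A : {poly F} := 1 + Z + Z ^+ 2.
set B : {poly F} := 1 + Z ^+ 3 + Z ^+ 6.
have Hm0 : (0 < m)%N by lia.
have HX : coprimep 'X M.
  rewrite coprimep_sym coprimepX /root /M !hornerE expr0n.
  have -> : (m == 0%N) = false by apply/eqP; lia.
  by rewrite sub0r oppr_eq0 oner_eq0.
have HZ6 : coprimep (Z ^+ 6) M by rewrite coprimep_pexpl // /Z coprimep_pexpl.
have red : coprimep (cpoly m \Po Z) M = coprimep (A * B) M.
  rewrite -[LHS]andbT -HZ6 -coprimepMl.
  have [n En] : exists n, m = (n + 13)%N by exists (m - 13)%N; lia.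
  have HC : cpoly m \Po Z = 1 + Z + Z ^+ 2 + Z ^+ 5 + Z ^+ 6 +
     Z ^+ n * (Z ^+ 12 + Z ^+ 11 + Z ^+ 8 + Z ^+ 7).
    rewrite /cpoly !big_cons big_nil addr0 !comp_polyD !comp_Xn_poly.
    have -> : (1 : {poly F}) \Po Z = 1 by rewrite -polyC1 comp_polyC.
    rewrite En.
    have -> : (n + 13 - 1 = n + 12)%N by lia.
    have -> : (n + 13 - 2 = n + 11)%N by lia.
    have -> : (n + 13 - 5 = n + 8)%N by lia.
    have -> : (n + 13 - 6 = n + 7)%N by lia.
    rewrite !exprD; ring.
  have HM : Z ^+ n * Z ^+ 13 - 1 = M * \sum_(i < k) ('X^m) ^+ i.
    by rewrite -exprD /Z -exprM mulnC exprM subrX1 /M En.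
  have HI : (cpoly m \Po Z) * Z ^+ 6 = A ^+ 3 * B +
      (Z ^+ n * Z ^+ 13 - 1) * (Z ^+ 5 + Z ^+ 4 + Z + 1) +
      2%:R * (- (Z + 3%:R * Z ^+ 2 + 4%:R * (Z ^+ 3 + Z ^+ 4 + Z ^+ 5 + Z ^+ 6
          + Z ^+ 7 + Z ^+ 8 + Z ^+ 9) + 3%:R * Z ^+ 10 + Z ^+ 11)).
    by rewrite HC /A /B; ring.
  rewrite HI two0 mul0r addr0 HM -mulrA addrC [M * _]mulrC coprimep_sym coprimep_addl_mul.
  by rewrite coprimep_sym coprimepMl coprimep_pexpl // coprimepMl.
rewrite red.
have QZ : A * B * (Z - 1) = 'X^(9 * k) - 1.
  by rewrite mulnC exprM -/Z /A /B; ring.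
have Q1 : A * B = (Z - 1) * (Z + Z ^+ 3 + Z ^+ 5 + Z ^+ 7) + 1.
  have -> : A * B = (Z - 1) * (Z + Z ^+ 3 + Z ^+ 5 + Z ^+ 7) + 1 +
     2%:R * (Z + Z ^+ 3 + Z ^+ 5 + Z ^+ 7) by rewrite /A /B; ring.
  by rewrite two0 mul0r addr0.
split.
- move=> cop.
  set g9 := gcdn (9 * k) m.
  have g9p : (0 < g9)%N by rewrite gcdn_gt0 Hm0 orbT.
  have g1p : (0 < gcdn k m)%N by rewrite gcdn_gt0 Hm0 orbT.
  have EM : 'X^g9 - 1 %| M by apply: dvd_XnD; exact: dvdn_gcdr.
  have E9 : ('X^g9 - 1 : {poly F}) %| 'X^(9 * k) - 1 by apply: dvd_XnD; exact: dvdn_gcdl.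
  have cE : coprimep ('X^g9 - 1) (A * B).
    by rewrite coprimep_sym; apply: coprimep_dvdl EM cop.
  have EZ : ('X^g9 - 1 : {poly F}) %| 'X^k - 1.
    by rewrite -(Gauss_dvdpr _ cE) QZ.
  have EG := @dvd_Xgcd _ k m hk EZ EM.
  have := dvdp_leq _ EG.
  rewrite !size_Xn_sub_1 // -size_poly_eq0 size_Xn_sub_1 // => /(_ isT) le.
  have d1 : (gcdn m k %| gcdn m (3 * k))%N.
    by rewrite dvdn_gcd dvdn_gcdl dvdn_mull // dvdn_gcdr.
  have d2 : (gcdn m (3 * k) %| g9)%N.
    have e9 : (9 * k = 3 * (3 * k))%N by rewrite mulnA.
    rewrite dvdn_gcd dvdn_gcdl andbT /g9 e9.
    by rewrite dvdn_mull // dvdn_gcdr.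
  have p3 : (0 < gcdn m (3 * k))%N by rewrite gcdn_gt0 Hm0.
  have l1 := dvdn_leq p3 d1.
  have l2 := dvdn_leq g9p d2.
  rewrite gcdnC ltnS in le.
  by apply/eqP; rewrite eqn_leq l1 (leq_trans l2 le).
- move=> H.
  have H9 : gcdn m (9 * k) = gcdn m k.
    have e9 : (9 * k = 3 * (3 * k))%N by rewrite mulnA.
    by rewrite e9 gcd3 H -gcd3 H.
  rewrite coprimep_def -dvdp1.
  have d1 := dvdp_gcdl (A * B) M.
  have d2 := dvdp_gcdr (A * B) M.
  have d3 : gcdp (A * B) M %| 'X^(9 * k) - 1 by rewrite -QZ dvdp_mulr.
  have p9 : (0 < 9 * k)%N by rewrite muln_gt0.
  have d4 := @dvd_Xgcd _ (9 * k) m p9 d3 d2.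
  have := d4.
  rewrite gcdnC H9 => d5.
  have d6 : gcdp (A * B) M %| Z - 1.
    by apply: dvdp_trans d5 _; apply: dvd_XnD; exact: dvdn_gcdr.
  have d7 : gcdp (A * B) M %| (Z - 1) * (Z + Z ^+ 3 + Z ^+ 5 + Z ^+ 7) + 1.
    by rewrite -Q1.
  by rewrite -(dvdp_addr _ (dvdp_mulr (Z + Z ^+ 3 + Z ^+ 5 + Z ^+ 7) d6)).
Qed.
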